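(* Let $f=(f_1,f_2):\mathbb{R}^2\to\mathbb{R}^2$ be a smooth one-generic mapping and let $F=(F_1,F_2)$ be as in the context. A point $p\in S_1(f)$ is a simple cusp if and only if $F(p)=\mathbf{0}$ and $DF(p)\cdot\begin{bmatrix}-\frac{\partial J}{\partial y}(p)\\ \frac{\partial J}{\partial x}(p)\end{bmatrix}\ne\mathbf{0}$; equivalently, if and only if $J(p)=0$, $F_1(p)=0$, $F_2(p)=0$, and $\frac{\partial(J,F_1)}{\partial(x,y)}(p)\ne0$ or $\frac{\partial(J,F_2)}{\partial(x,y)}(p)\ne0$.
   Context: $J=\det Df$; $F_i=\frac{\partial(J,f_i)}{\partial(x,y)}=\frac{\partial J}{\partial x}\frac{\partial f_i}{\partial y}-\frac{\partial J}{\partial y}\frac{\partial f_i}{\partial x}$, i.e. $F=Df\cdot(-\partial J/\partial y,\partial J/\partial x)^T$. $f$ is one-generic if $j^1f$ is transverse to the corank-$r$ strata of the 1-jet space for all $r$ (equivalently $dJ\neq0$ on $J^{-1}(0)$, and then $S_1(f)=J^{-1}(0)$ where $S_1(f)=\{p:\operatorname{rank}Df(p)=1\}$). For $p\in S_1(f)$ with $T_pS_1(f)=\ker Df(p)$, $p$ is a simple cusp if $p$ is a simple zero of the function $dJ(\xi)$ on $S_1(f)$, where $\xi$ is a nonvanishing vector field along $S_1(f)$ near $p$ lying in $\ker Df$ (the order of this zero does not depend on the choice of $\xi$). *)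

(* Defs.v *)
From Stdlib Require Import Reals List.
From Coquelicot Require Import Coquelicot.
Open Scope R_scope.

Definition pdx (g : R -> R -> R) : R -> R -> R := fun x y => Derive (fun t => g t y) x.
Definition pdy (g : R -> R -> R) : R -> R -> R := fun x y => Derive (fun t => g x t) y.

Fixpoint ipd (l : list bool) (g : R -> R -> R) : R -> R -> R :=
  match l with
  | nil => g
  | b :: l' => (if b then pdx else pdy) (ipd l' g)
  end.

Definition smooth2 (g : R -> R -> R) : Prop :=
  forall (l : list bool) (x y : R), differentiable_pt (ipd l g) x y.

Definition smooth1 (g : R -> R) : Prop := forall (n : nat) (t : R), ex_derive_n g n t.

Definition Jac (f1 f2 : R -> R -> R) : R -> R -> R :=
  fun x y => pdx f1 x y * pdy f2 x y - pdy f1 x y * pdx f2 x y.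

Definition jac2 (A B : R -> R -> R) : R -> R -> R :=
  fun x y => pdx A x y * pdy B x y - pdy A x y * pdx B x y.

Definition Ffun (f1 f2 fi : R -> R -> R) : R -> R -> R := jac2 (Jac f1 f2) fi.

(* one-generic, in the equivalent form given in the context: dJ <> 0 on J^{-1}(0) *)
Definition one_generic (f1 f2 : R -> R -> R) : Prop :=
  forall x y, Jac f1 f2 x y = 0 ->
    ~ (pdx (Jac f1 f2) x y = 0 /\ pdy (Jac f1 f2) x y = 0).

(* S_1(f) : rank Df(p) = 1, i.e. det Df(p) = 0 and Df(p) <> 0 *)
Definition in_S1 (f1 f2 : R -> R -> R) (x y : R) : Prop :=
  Jac f1 f2 x y = 0 /\
  ~ (pdx f1 x y = 0 /\ pdy f1 x y = 0 /\ pdx f2 x y = 0 /\ pdy f2 x y = 0).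

Definition in_kerDf (f1 f2 : R -> R -> R) (x y v1 v2 : R) : Prop :=
  pdx f1 x y * v1 + pdy f1 x y * v2 = 0 /\ pdx f2 x y * v1 + pdy f2 x y * v2 = 0.

(* Simple cusp: p in S_1(f), T_p S_1(f) = ker Df(p), and p is a simple zero of dJ(xi)
   restricted to S_1(f), where xi is a nonvanishing smooth vector field along S_1(f)
   near p lying in ker Df.  S_1(f) near p is described by a smooth regular curve
   gamma = (g1,g2) with gamma(0) = p lying in S_1(f) = J^{-1}(0); the vector field
   along it is xi = (k1,k2); "simple zero" means h(0) = 0 and h'(0) <> 0 with
   h(t) = dJ_{gamma(t)}(xi(t)). *)
Definition simple_cusp (f1 f2 : R -> R -> R) (x0 y0 : R) : Prop :=
  in_S1 f1 f2 x0 y0 /\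
  exists (eps : R) (g1 g2 k1 k2 : R -> R),
    0 < eps /\
    smooth1 g1 /\ smooth1 g2 /\ smooth1 k1 /\ smooth1 k2 /\
    g1 0 = x0 /\ g2 0 = y0 /\
    ~ (Derive g1 0 = 0 /\ Derive g2 0 = 0) /\
    (forall t, -eps < t < eps ->
       Jac f1 f2 (g1 t) (g2 t) = 0 /\
       ~ (k1 t = 0 /\ k2 t = 0) /\
       in_kerDf f1 f2 (g1 t) (g2 t) (k1 t) (k2 t)) /\
    in_kerDf f1 f2 x0 y0 (Derive g1 0) (Derive g2 0) /\
    let h := fun t => pdx (Jac f1 f2) (g1 t) (g2 t) * k1 t
                      + pdy (Jac f1 f2) (g1 t) (g2 t) * k2 t in
    h 0 = 0 /\ Derive h 0 <> 0.

(* Main.v *)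
Require Import Defs.
From Stdlib Require Import Reals Lra Lia Psatz List FunctionalExtensionality IndefiniteDescription.
From Coquelicot Require Import Coquelicot.
Open Scope R_scope.


Lemma D_mul f g x a b : is_derive f x a -> is_derive g x b ->
  is_derive (fun t => f t * g t) x (a * g x + f x * b).
Proof.
  intros Ha Hb; apply is_derive_Reals; apply (derivable_pt_lim_mult f g x a b);
  apply is_derive_Reals; assumption.
Qed.

Lemma D_plus f g x a b : is_derive f x a -> is_derive g x b ->
  is_derive (fun t => f t + g t) x (a + b).
Proof.
  intros Ha Hb; apply is_derive_Reals; apply (derivable_pt_lim_plus f g x a b);
  apply is_derive_Reals; assumption.
Qed.

Lemma D_minus f g x a b : is_derive f x a -> is_derive g x b ->
  is_derive (fun t => f t - g t) x (a - b).
Proof.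
  intros Ha Hb; apply is_derive_Reals; apply (derivable_pt_lim_minus f g x a b);
  apply is_derive_Reals; assumption.
Qed.

Lemma D_const c x : is_derive (fun _ => c) x 0.
Proof. apply is_derive_Reals; apply derivable_pt_lim_const. Qed.

Lemma D_id x : is_derive (fun t => t) x 1.
Proof. apply is_derive_Reals; apply derivable_pt_lim_id. Qed.

Lemma dpl_lin (al be a b : R) :
  differentiable_pt_lim (fun s t => al * s + be * t) a b al be.
Proof.
  intros eps; exists eps; intros u v _ _.
  replace (al * u + be * v - (al * a + be * b) - (al * (u - a) + be * (v - b))) with 0 by ring.
  rewrite Rabs_R0. apply Rmult_le_pos. apply Rlt_le, cond_pos.
  apply Rle_trans with (Rabs (u - a)); [apply Rabs_pos | apply Rmax_l].
Qed.

Lemma dpl_mul (a b : R) :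
  differentiable_pt_lim (fun s t => s * t) a b b a.
Proof.
  intros eps; exists eps; intros u v Hu Hv.
  replace (u * v - a * b - (b * (u - a) + a * (v - b))) with ((u - a) * (v - b)) by ring.
  rewrite Rabs_mult.
  set (M := Rmax (Rabs (u - a)) (Rabs (v - b))).
  assert (H1 : Rabs (u - a) <= M) by apply Rmax_l.
  assert (H2 : Rabs (v - b) <= M) by apply Rmax_r.
  rewrite Rmult_comm.
  apply Rmult_le_compat; try apply Rabs_pos; lra.
Qed.

Lemma dpl_proj1 (a b : R) : differentiable_pt_lim (fun s t => s) a b 1 0.
Proof.
  intros eps; exists eps; intros u v _ _.
  replace (u - a - (1 * (u - a) + 0 * (v - b))) with 0 by ring.
  rewrite Rabs_R0. apply Rmult_le_pos. apply Rlt_le, cond_pos.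
  apply Rle_trans with (Rabs (u - a)); [apply Rabs_pos | apply Rmax_l].
Qed.

Lemma dpl_proj2 (a b : R) : differentiable_pt_lim (fun s t => t) a b 0 1.
Proof.
  intros eps; exists eps; intros u v _ _.
  replace (v - b - (0 * (u - a) + 1 * (v - b))) with 0 by ring.
  rewrite Rabs_R0. apply Rmult_le_pos. apply Rlt_le, cond_pos.
  apply Rle_trans with (Rabs (u - a)); [apply Rabs_pos | apply Rmax_l].
Qed.

Definition lin2 (al be : R) (u v : R -> R -> R) : R -> R -> R :=
  fun x y => al * u x y + be * v x y.
Definition mul2 (u v : R -> R -> R) : R -> R -> R := fun x y => u x y * v x y.
Definition pd (b : bool) : (R -> R -> R) -> R -> R -> R := if b then pdx else pdy.

Lemma dp_lin al be u v x y : differentiable_pt u x y -> differentiable_pt v x y ->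
  differentiable_pt (lin2 al be u v) x y.
Proof.
  intros [ux [uy Hu]] [vx [vy Hv]].
  eexists; eexists.
  apply (differentiable_pt_lim_comp (fun s t => al * s + be * t) u v x y al be ux uy vx vy).
  apply dpl_lin. exact Hu. exact Hv.
Qed.

Lemma dp_mul u v x y : differentiable_pt u x y -> differentiable_pt v x y ->
  differentiable_pt (mul2 u v) x y.
Proof.
  intros [ux [uy Hu]] [vx [vy Hv]].
  eexists; eexists.
  apply (differentiable_pt_lim_comp (fun s t => s * t) u v x y (v x y) (u x y) ux uy vx vy).
  apply dpl_mul. exact Hu. exact Hv.
Qed.

Lemma dp_swap u x y : differentiable_pt u y x -> differentiable_pt (fun a b => u b a) x y.
Proof.
  intros [ux [uy Hu]].
  eexists; eexists.
  apply (differentiable_pt_lim_comp u (fun s t => t) (fun s t => s) x y ux uy 0 1 1 0).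
  exact Hu. apply dpl_proj2. apply dpl_proj1.
Qed.

Lemma dp_partials g x y : differentiable_pt g x y ->
  ex_derive (fun t => g t y) x /\ ex_derive (fun t => g x t) y.
Proof.
  intros [lx [ly H]]; split.
  - exists (lx * 1 + ly * 0). apply is_derive_Reals.
    apply (derivable_pt_lim_comp_2d g (fun t => t) (fun _ => y) x lx ly 1 0 H).
    apply derivable_pt_lim_id. apply derivable_pt_lim_const.
  - exists (lx * 0 + ly * 1). apply is_derive_Reals.
    apply (derivable_pt_lim_comp_2d g (fun _ => x) (fun t => t) y lx ly 0 1 H).
    apply derivable_pt_lim_const. apply derivable_pt_lim_id.
Qed.

Lemma dp_lim g x y : differentiable_pt g x y ->
  differentiable_pt_lim g x y (pdx g x y) (pdy g x y).
Proof.
  intros [lx [ly H]].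
  destruct (differentiable_pt_lim_unique g x y lx ly H) as [E1 E2].
  unfold pdx, pdy; rewrite E1, E2; exact H.
Qed.

Lemma chain K g1 g2 t a b : differentiable_pt K (g1 t) (g2 t) ->
  is_derive g1 t a -> is_derive g2 t b ->
  is_derive (fun s => K (g1 s) (g2 s)) t (pdx K (g1 t) (g2 t) * a + pdy K (g1 t) (g2 t) * b).
Proof.
  intros HK Ha Hb. apply is_derive_Reals.
  apply derivable_pt_lim_comp_2d. apply dp_lim; exact HK.
  apply is_derive_Reals; exact Ha. apply is_derive_Reals; exact Hb.
Qed.

Definition Sn (n : nat) (g : R -> R -> R) : Prop :=
  forall l, (length l <= n)%nat -> forall x y, differentiable_pt (ipd l g) x y.

Lemma ipd_app l b g : ipd (l ++ b :: nil) g = ipd l (pd b g).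
Proof. induction l as [|c l IH]; simpl. reflexivity. rewrite IH. reflexivity. Qed.

Lemma Sn_mono n g : Sn (S n) g -> Sn n g.
Proof. intros H l Hl; apply H; lia. Qed.

Lemma Sn_pd n b g : Sn (S n) g -> Sn n (pd b g).
Proof.
  intros H l Hl x y. rewrite <- ipd_app. apply H. rewrite length_app; simpl; lia.
Qed.

Lemma smooth2_Sn g : smooth2 g <-> forall n, Sn n g.
Proof.
  split. intros H n l _; apply H. intros H l; apply (H (length l)); lia.
Qed.

Lemma smooth2_pd b g : smooth2 g -> smooth2 (pd b g).
Proof.
  intros H l x y. rewrite <- ipd_app. apply H.
Qed.

Lemma smooth2_pdx g : smooth2 g -> smooth2 (pdx g).
Proof. apply (smooth2_pd true). Qed.
Lemma smooth2_pdy g : smooth2 g -> smooth2 (pdy g).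
Proof. apply (smooth2_pd false). Qed.

Lemma pd_lin b al be u v : (forall x y, differentiable_pt u x y) ->
  (forall x y, differentiable_pt v x y) ->
  pd b (lin2 al be u v) = lin2 al be (pd b u) (pd b v).
Proof.
  intros Hu Hv. apply functional_extensionality; intro x.
  apply functional_extensionality; intro y.
  destruct (dp_partials u x y (Hu x y)) as [ux uy].
  destruct (dp_partials v x y (Hv x y)) as [vx vy].
  destruct b; unfold pd, lin2, pdx, pdy; simpl.
  - rewrite Derive_plus. rewrite !Derive_scal. reflexivity.
    apply ex_derive_scal; exact ux. apply ex_derive_scal; exact vx.
  - rewrite Derive_plus. rewrite !Derive_scal. reflexivity.
    apply ex_derive_scal; exact uy. apply ex_derive_scal; exact vy.
Qed.

Lemma pd_mul b u v : (forall x y, differentiable_pt u x y) ->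
  (forall x y, differentiable_pt v x y) ->
  pd b (mul2 u v) = lin2 1 1 (mul2 (pd b u) v) (mul2 u (pd b v)).
Proof.
  intros Hu Hv. apply functional_extensionality; intro x.
  apply functional_extensionality; intro y.
  destruct (dp_partials u x y (Hu x y)) as [ux uy].
  destruct (dp_partials v x y (Hv x y)) as [vx vy].
  destruct b; unfold pd, lin2, mul2, pdx, pdy; simpl.
  - rewrite Derive_mult by assumption. ring.
  - rewrite Derive_mult by assumption. change (Derive (u x) y) with (Derive (fun t => u x t) y). change (Derive (v x) y) with (Derive (fun t => v x t) y). change (@eq R (Derive (fun t => u x t) y * v x y + u x y * Derive (fun t => v x t) y) (1 * (Derive (fun t : R => u x t) y * v x y) + 1 * (u x y * Derive (fun t : R => v x t) y))). ring.
Qed.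

Lemma ipd_lin n al be u v : Sn n u -> Sn n v ->
  forall l, (length l <= n)%nat -> ipd l (lin2 al be u v) = lin2 al be (ipd l u) (ipd l v).
Proof.
  intros Hu Hv l; induction l as [|c l IH]; intros Hl; simpl. reflexivity.
  simpl in Hl. rewrite IH by lia.
  change ((if c then pdx else pdy) (lin2 al be (ipd l u) (ipd l v)) =
          lin2 al be ((if c then pdx else pdy) (ipd l u)) ((if c then pdx else pdy) (ipd l v))).
  apply (pd_lin c). intros; apply Hu; lia. intros; apply Hv; lia.
Qed.

Lemma Sn_lin n al be u v : Sn n u -> Sn n v -> Sn n (lin2 al be u v).
Proof.
  intros Hu Hv l Hl x y. rewrite (ipd_lin n) by assumption.
  apply dp_lin. apply Hu; auto. apply Hv; auto.
Qed.

Lemma Sn_mul n : forall u v, Sn n u -> Sn n v -> Sn n (mul2 u v).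
Proof.
  induction n as [|n IH]; intros u v Hu Hv l Hl x y.
  - destruct l; [|simpl in Hl; lia]. simpl. apply dp_mul. apply (Hu nil); simpl; lia.
    apply (Hv nil); simpl; lia.
  - induction l as [|b l _] using rev_ind.
    + simpl. apply dp_mul. apply (Hu nil); simpl; lia. apply (Hv nil); simpl; lia.
    + rewrite length_app in Hl; simpl in Hl.
      rewrite ipd_app. rewrite pd_mul.
      * refine (Sn_lin n _ _ _ _ _ _ l _ x y); [apply IH|apply IH|lia];
        first [apply Sn_pd; assumption | apply Sn_mono; assumption].
      * intros; apply (Hu nil); simpl; lia.
      * intros; apply (Hv nil); simpl; lia.
Qed.

Lemma smooth2_lin al be u v : smooth2 u -> smooth2 v -> smooth2 (lin2 al be u v).
Proof.
  intros Hu Hv; apply smooth2_Sn; intro n; apply Sn_lin; apply smooth2_Sn; assumption.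
Qed.

Lemma smooth2_mul u v : smooth2 u -> smooth2 v -> smooth2 (mul2 u v).
Proof.
  intros Hu Hv; apply smooth2_Sn; intro n; apply Sn_mul; apply smooth2_Sn; assumption.
Qed.

Lemma smooth2_ext u v : smooth2 u -> (forall x y, u x y = v x y) -> smooth2 v.
Proof.
  intros Hu E. replace v with u. exact Hu.
  apply functional_extensionality; intro x; apply functional_extensionality; intro y; apply E.
Qed.

Lemma ipd_swap l u : ipd l (fun a b => u b a) = (fun a b => ipd (map negb l) u b a).
Proof.
  induction l as [|c l IH]; simpl. reflexivity.
  rewrite IH. destruct c; reflexivity.
Qed.

Lemma smooth2_swap u : smooth2 u -> smooth2 (fun a b => u b a).
Proof.
  intros Hu l x y. rewrite ipd_swap. apply dp_swap. apply Hu.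
Qed.

Lemma smooth2_diff u x y : smooth2 u -> differentiable_pt u x y.
Proof. intros H; apply (H nil). Qed.

Lemma Jac_smooth f1 f2 : smooth2 f1 -> smooth2 f2 -> smooth2 (Jac f1 f2).
Proof.
  intros H1 H2.
  apply smooth2_ext with (lin2 1 (-1) (mul2 (pdx f1) (pdy f2)) (mul2 (pdy f1) (pdx f2))).
  apply smooth2_lin; apply smooth2_mul; (apply smooth2_pdx || apply smooth2_pdy); assumption.
  intros; unfold lin2, mul2, Jac; ring.
Qed.

Lemma jac2_smooth A B : smooth2 A -> smooth2 B -> smooth2 (jac2 A B).
Proof.
  intros H1 H2.
  apply smooth2_ext with (lin2 1 (-1) (mul2 (pdx A) (pdy B)) (mul2 (pdy A) (pdx B))).
  apply smooth2_lin; apply smooth2_mul; (apply smooth2_pdx || apply smooth2_pdy); assumption.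
  intros; unfold lin2, mul2, jac2; ring.
Qed.

Lemma Ffun_smooth f1 f2 fi : smooth2 f1 -> smooth2 f2 -> smooth2 fi -> smooth2 (Ffun f1 f2 fi).
Proof.
  intros; unfold Ffun; apply jac2_smooth; [apply Jac_smooth|]; assumption.
Qed.



Lemma E_plus f g x : ex_derive f x -> ex_derive g x -> ex_derive (fun t => f t + g t) x.
Proof. intros [a Ha] [b Hb]; exists (a + b); apply D_plus; auto. Qed.
Lemma E_mul f g x : ex_derive f x -> ex_derive g x -> ex_derive (fun t => f t * g t) x.
Proof. intros [a Ha] [b Hb]; eexists; apply D_mul; eauto. Qed.
Lemma E_scal c f x : ex_derive f x -> ex_derive (fun t => c * f t) x.
Proof. intros H. apply (E_mul (fun _ => c) f). exists 0; apply D_const. exact H. Qed.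

Fixpoint Ck (n : nat) (h : R -> R) : Prop :=
  match n with
  | O => True
  | S m => (forall t, ex_derive h t) /\ Ck m (Derive h)
  end.

Lemma Ck_mono n : forall h, Ck (S n) h -> Ck n h.
Proof.
  induction n as [|n IH]; intros h H. exact I.
  destruct H as [H1 H2]. split. exact H1. apply IH; exact H2.
Qed.

Lemma Ck_ext n h g : Ck n h -> (forall t, h t = g t) -> Ck n g.
Proof.
  intros H E. replace g with h. exact H. apply functional_extensionality; exact E.
Qed.

Lemma Ck_lin n : forall al be a b, Ck n a -> Ck n b -> Ck n (fun t => al * a t + be * b t).
Proof.
  induction n as [|n IH]; intros al be a b Ha Hb. exact I.
  destruct Ha as [Ha1 Ha2], Hb as [Hb1 Hb2]. split.
  - intro t. apply E_plus; apply E_scal; auto.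
  - apply Ck_ext with (fun t => al * Derive a t + be * Derive b t).
    apply IH; assumption.
    intro t. rewrite Derive_plus. rewrite !Derive_scal. reflexivity.
    apply E_scal; auto. apply E_scal; auto.
Qed.

Lemma Ck_mul n : forall a b, Ck n a -> Ck n b -> Ck n (fun t => a t * b t).
Proof.
  induction n as [|n IH]; intros a b Ha Hb. exact I.
  pose proof (Ck_mono _ _ Ha) as Ha0. pose proof (Ck_mono _ _ Hb) as Hb0.
  destruct Ha as [Ha1 Ha2], Hb as [Hb1 Hb2]. split.
  - intro t. apply E_mul; auto.
  - apply Ck_ext with (fun t => 1 * (Derive a t * b t) + 1 * (a t * Derive b t)).
    apply Ck_lin; apply IH; assumption.
    intro t. rewrite Derive_mult by auto. ring.
Qed.

Lemma Ck_const n : forall c, Ck n (fun _ => c).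
Proof.
  induction n as [|n IH]; intros c. exact I.
  split. intro t; apply ex_derive_const.
  apply Ck_ext with (fun _ => 0). apply IH. intro t; rewrite Derive_const; reflexivity.
Qed.

Lemma Ck_id n : Ck n (fun t => t).
Proof.
  destruct n. exact I. split. intro t; apply ex_derive_id.
  apply Ck_ext with (fun _ => 1). apply Ck_const. intro t. symmetry. apply (Derive_id t).
Qed.

Lemma Ck_inv n : forall a, (forall t, a t <> 0) -> Ck n a -> Ck n (fun t => / a t).
Proof.
  induction n as [|n IH]; intros a Hnz Ha. exact I.
  pose proof (Ck_mono _ _ Ha) as Ha0.
  destruct Ha as [Ha1 Ha2]. split.
  - intro t. apply ex_derive_inv; auto.
  - apply Ck_ext with (fun t => (-1) * (Derive a t * ((/ a t) * (/ a t))) + 0 * 0).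
    apply Ck_lin. apply Ck_mul. assumption. apply Ck_mul; apply IH; assumption.
    apply Ck_const.
    intro t. rewrite Derive_inv by auto. field. auto.
Qed.

Lemma Ck_comp2 n : forall K g1 g2, smooth2 K -> Ck n g1 -> Ck n g2 ->
  Ck n (fun t => K (g1 t) (g2 t)).
Proof.
  induction n as [|n IH]; intros K g1 g2 HK H1 H2. exact I.
  pose proof (Ck_mono _ _ H1) as H10. pose proof (Ck_mono _ _ H2) as H20.
  destruct H1 as [H11 H12], H2 as [H21 H22].
  assert (D : forall t, is_derive (fun s => K (g1 s) (g2 s)) t
     (pdx K (g1 t) (g2 t) * Derive g1 t + pdy K (g1 t) (g2 t) * Derive g2 t)).
  { intro t. apply chain. apply smooth2_diff; auto.
    apply Derive_correct; auto. apply Derive_correct; auto. }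
  split.
  - intro t. eexists. apply D.
  - apply Ck_ext with (fun t => 1 * ((pdx K (g1 t) (g2 t)) * Derive g1 t)
                              + 1 * ((pdy K (g1 t) (g2 t)) * Derive g2 t)).
    apply Ck_lin; apply Ck_mul; auto.
    apply IH; auto. apply smooth2_pdx; auto.
    apply IH; auto. apply smooth2_pdy; auto.
    intro t. symmetry. etransitivity. apply (is_derive_unique _ _ _ (D t)). ring.
Qed.

Lemma Ck_exd n : forall h, Ck (S n) h -> forall t, ex_derive (Derive_n h n) t.
Proof.
  induction n as [|n IH]; intros h H t.
  - destruct H as [H _]. apply H.
  - destruct H as [H1 H2].
    assert (E : Derive_n h (S n) = Derive_n (Derive h) n).
    { apply functional_extensionality; intro s.
      replace (S n) with (n + 1)%nat by lia.
      rewrite <- (Derive_n_comp h n 1 s). apply Derive_n_ext. intro; reflexivity. }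
    rewrite E. apply IH. exact H2.
Qed.

Lemma Ck_smooth1 h : (forall n, Ck n h) -> smooth1 h.
Proof.
  intros H n t. destruct n. exact I. simpl. apply (Ck_exd n). apply H.
Qed.


Lemma loc_of_eps (P : R -> Prop) eps : 0 < eps -> (forall t, -eps < t < eps -> P t) ->
  locally 0 P.
Proof.
  intros He H. exists (mkposreal eps He). intros t Ht. apply H.
  change (Rabs (t - 0) < eps) in Ht. apply Rabs_def2 in Ht. lra.
Qed.

Lemma derive_loc_eq (f g : R -> R) (x a b : R) : locally x (fun t => f t = g t) ->
  is_derive f x a -> is_derive g x b -> a = b.
Proof.
  intros L Ha Hb. apply (is_derive_ext_loc f g x a L) in Ha.
  rewrite <- (is_derive_unique _ _ _ Ha). apply is_derive_unique; exact Hb.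
Qed.

Lemma core_i (f1 f2 fi : R -> R -> R) (g1 g2 k1 k2 : R -> R) (dg1 dg2 dk1 dk2 eps : R) :
  smooth2 f1 -> smooth2 f2 -> smooth2 fi ->
  is_derive g1 0 dg1 -> is_derive g2 0 dg2 -> is_derive k1 0 dk1 -> is_derive k2 0 dk2 ->
  0 < eps ->
  (forall t, -eps < t < eps ->
     pdx fi (g1 t) (g2 t) * k1 t + pdy fi (g1 t) (g2 t) * k2 t = 0) ->
  let h := fun t => pdx (Jac f1 f2) (g1 t) (g2 t) * k1 t + pdy (Jac f1 f2) (g1 t) (g2 t) * k2 t in
  is_derive h 0 (Derive h 0) /\
  exists Np mp,
   Ffun f1 f2 fi (g1 0) (g2 0) * (k1 0 * k1 0 + k2 0 * k2 0) =
     h 0 * (pdy fi (g1 0) (g2 0) * k1 0 - pdx fi (g1 0) (g2 0) * k2 0) /\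
   (pdx (Ffun f1 f2 fi) (g1 0) (g2 0) * dg1 + pdy (Ffun f1 f2 fi) (g1 0) (g2 0) * dg2)
      * (k1 0 * k1 0 + k2 0 * k2 0) + Ffun f1 f2 fi (g1 0) (g2 0) * Np =
     Derive h 0 * (pdy fi (g1 0) (g2 0) * k1 0 - pdx fi (g1 0) (g2 0) * k2 0) + h 0 * mp.
Proof.
  intros S1 S2 Si D1 D2 Dk1 Dk2 He Hker h.
  pose proof (Jac_smooth f1 f2 S1 S2) as SJ.
  pose proof (Ffun_smooth f1 f2 fi S1 S2 Si) as SF.
  assert (Hh : is_derive h 0 (Derive h 0)).
  { apply Derive_correct. eexists. unfold h.
    apply D_plus; apply D_mul; try eassumption; apply chain; try eassumption;
      apply smooth2_diff; (apply smooth2_pdx || apply smooth2_pdy); auto. }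
  split. exact Hh.
  assert (Id : forall t, Ffun f1 f2 fi (g1 t) (g2 t) * (k1 t * k1 t + k2 t * k2 t) =
     h t * (pdy fi (g1 t) (g2 t) * k1 t - pdx fi (g1 t) (g2 t) * k2 t) +
     (pdx (Jac f1 f2) (g1 t) (g2 t) * k2 t - pdy (Jac f1 f2) (g1 t) (g2 t) * k1 t) *
     (pdx fi (g1 t) (g2 t) * k1 t + pdy fi (g1 t) (g2 t) * k2 t)).
  { intro t. unfold h, Ffun, jac2. ring. }
  assert (DN : is_derive (fun t => k1 t * k1 t + k2 t * k2 t) 0
                  (dk1 * k1 0 + k1 0 * dk1 + (dk2 * k2 0 + k2 0 * dk2))).
  { apply D_plus; apply D_mul; auto. }
  assert (Dm : ex_derive (fun t => pdy fi (g1 t) (g2 t) * k1 t - pdx fi (g1 t) (g2 t) * k2 t) 0).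
  { eexists. apply D_minus; apply D_mul; try eassumption; apply chain; try eassumption;
      apply smooth2_diff; (apply smooth2_pdx || apply smooth2_pdy); auto. }
  destruct Dm as [mp Dm].
  exists (dk1 * k1 0 + k1 0 * dk1 + (dk2 * k2 0 + k2 0 * dk2)), mp.
  split.
  - rewrite Id. rewrite (Hker 0) by lra. ring.
  - pose proof (D_mul _ _ 0 _ _ (chain (Ffun f1 f2 fi) g1 g2 0 dg1 dg2 (smooth2_diff _ _ _ SF) D1 D2) DN) as L.
    pose proof (D_mul _ _ 0 _ _ Hh Dm) as Rr.
    simpl in L, Rr.
    assert (Loc : locally 0 (fun t => Ffun f1 f2 fi (g1 t) (g2 t) * (k1 t * k1 t + k2 t * k2 t) =
       h t * (pdy fi (g1 t) (g2 t) * k1 t - pdx fi (g1 t) (g2 t) * k2 t))).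
    { apply (loc_of_eps _ eps He). intros t Ht. rewrite Id, (Hker t Ht). ring. }
    pose proof (derive_loc_eq _ _ 0 _ _ Loc L Rr) as E. rewrite <- E. ring.
Qed.

Lemma core_J (f1 f2 : R -> R -> R) (g1 g2 : R -> R) (dg1 dg2 eps : R) :
  smooth2 f1 -> smooth2 f2 -> is_derive g1 0 dg1 -> is_derive g2 0 dg2 -> 0 < eps ->
  (forall t, -eps < t < eps -> Jac f1 f2 (g1 t) (g2 t) = 0) ->
  pdx (Jac f1 f2) (g1 0) (g2 0) * dg1 + pdy (Jac f1 f2) (g1 0) (g2 0) * dg2 = 0.
Proof.
  intros S1 S2 D1 D2 He HJ.
  pose proof (chain (Jac f1 f2) g1 g2 0 dg1 dg2 (smooth2_diff _ _ _ (Jac_smooth f1 f2 S1 S2)) D1 D2) as L.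
  apply (derive_loc_eq _ (fun _ => 0) 0 _ 0) in L. exact L.
  apply (loc_of_eps _ eps He). exact HJ. apply D_const.
Qed.

Lemma sumsq_nz a b : ~ (a = 0 /\ b = 0) -> a * a + b * b <> 0.
Proof.
  intros H E. apply H.
  assert (0 <= a * a) by apply Rle_0_sqr. assert (0 <= b * b) by apply Rle_0_sqr.
  split; apply Rsqr_0_uniq; unfold Rsqr; lra.
Qed.

Lemma m_nonzero a1 b1 a2 b2 K1 K2 :
  ~ (a1 = 0 /\ b1 = 0 /\ a2 = 0 /\ b2 = 0) -> ~ (K1 = 0 /\ K2 = 0) ->
  a1 * K1 + b1 * K2 = 0 -> a2 * K1 + b2 * K2 = 0 ->
  ~ (b1 * K1 - a1 * K2 = 0 /\ b2 * K1 - a2 * K2 = 0).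
Proof.
  intros HS HK H1 H2 [M1 M2]. apply HS.
  pose proof (sumsq_nz K1 K2 HK) as N.
  assert (E1 : a1 * (K1 * K1 + K2 * K2) = K1 * (a1 * K1 + b1 * K2) - K2 * (b1 * K1 - a1 * K2)) by ring.
  assert (E2 : b1 * (K1 * K1 + K2 * K2) = K2 * (a1 * K1 + b1 * K2) + K1 * (b1 * K1 - a1 * K2)) by ring.
  assert (E3 : a2 * (K1 * K1 + K2 * K2) = K1 * (a2 * K1 + b2 * K2) - K2 * (b2 * K1 - a2 * K2)) by ring.
  assert (E4 : b2 * (K1 * K1 + K2 * K2) = K2 * (a2 * K1 + b2 * K2) + K1 * (b2 * K1 - a2 * K2)) by ring.
  rewrite H1, M1 in E1, E2. rewrite H2, M2 in E3, E4.
  repeat split; apply (Rmult_eq_reg_r (K1 * K1 + K2 * K2)); auto; lra.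
Qed.

Lemma key_id Fx Fy Jx Jy d1 d2 :
  (Fx * d1 + Fy * d2) * (Jx * Jx + Jy * Jy) =
  (Jx * d2 - Jy * d1) * (Fx * (- Jy) + Fy * Jx) + (Jx * d1 + Jy * d2) * (Fx * Jx + Fy * Jy).
Proof. ring. Qed.

Lemma prod0 x N : N <> 0 -> x * N = 0 -> x = 0.
Proof. intros HN H. apply Rmult_integral in H. destruct H; [auto|contradiction]. Qed.
Lemma prod0' x N : N <> 0 -> N * x = 0 -> x = 0.
Proof. intros HN H. apply Rmult_integral in H. destruct H; [contradiction|auto]. Qed.

Lemma alg_forward a1 b1 a2 b2 Jx Jy F1 F2 F1x F1y F2x F2y K1 K2 d1 d2 h0 dh N1 m1 N2 m2 :
  ~ (a1 = 0 /\ b1 = 0 /\ a2 = 0 /\ b2 = 0) -> ~ (Jx = 0 /\ Jy = 0) -> ~ (K1 = 0 /\ K2 = 0) ->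
  a1 * K1 + b1 * K2 = 0 -> a2 * K1 + b2 * K2 = 0 ->
  F1 * (K1 * K1 + K2 * K2) = h0 * (b1 * K1 - a1 * K2) ->
  F2 * (K1 * K1 + K2 * K2) = h0 * (b2 * K1 - a2 * K2) ->
  (F1x * d1 + F1y * d2) * (K1 * K1 + K2 * K2) + F1 * N1 = dh * (b1 * K1 - a1 * K2) + h0 * m1 ->
  (F2x * d1 + F2y * d2) * (K1 * K1 + K2 * K2) + F2 * N2 = dh * (b2 * K1 - a2 * K2) + h0 * m2 ->
  Jx * d1 + Jy * d2 = 0 ->
  h0 = 0 -> dh <> 0 ->
  F1 = 0 /\ F2 = 0 /\ ~ (F1x * (- Jy) + F1y * Jx = 0 /\ F2x * (- Jy) + F2y * Jx = 0).
Proof.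
  intros HS HJ HK k1 k2 E11 E12 E21 E22 E3 H0 Hdh.
  pose proof (sumsq_nz K1 K2 HK) as N.
  pose proof (sumsq_nz Jx Jy HJ) as JJ.
  subst h0. rewrite Rmult_0_l in E11, E12. rewrite Rmult_0_l, Rplus_0_r in E21, E22.
  pose proof (prod0 _ _ N E11) as F1z. pose proof (prod0 _ _ N E12) as F2z.
  split; auto. split; auto. intros [V1 V2].
  pose proof (key_id F1x F1y Jx Jy d1 d2) as I1. rewrite V1, E3, Rmult_0_r, Rmult_0_l, Rplus_0_r in I1.
  pose proof (key_id F2x F2y Jx Jy d1 d2) as I2. rewrite V2, E3, Rmult_0_r, Rmult_0_l, Rplus_0_r in I2.
  pose proof (prod0 _ _ JJ I1) as Z1. pose proof (prod0 _ _ JJ I2) as Z2.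
  rewrite Z1, F1z, !Rmult_0_l, Rplus_0_r in E21. rewrite Z2, F2z, !Rmult_0_l, Rplus_0_r in E22.
  apply (m_nonzero a1 b1 a2 b2 K1 K2 HS HK k1 k2). split.
  - apply (prod0' _ dh); auto.
  - apply (prod0' _ dh); auto.
Qed.

Lemma alg_backward a1 b1 a2 b2 Jx Jy F1 F2 F1x F1y F2x F2y K1 K2 d1 d2 h0 dh N1 m1 N2 m2 :
  ~ (a1 = 0 /\ b1 = 0 /\ a2 = 0 /\ b2 = 0) -> ~ (Jx = 0 /\ Jy = 0) -> ~ (K1 = 0 /\ K2 = 0) ->
  a1 * K1 + b1 * K2 = 0 -> a2 * K1 + b2 * K2 = 0 ->
  F1 * (K1 * K1 + K2 * K2) = h0 * (b1 * K1 - a1 * K2) ->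
  F2 * (K1 * K1 + K2 * K2) = h0 * (b2 * K1 - a2 * K2) ->
  (F1x * d1 + F1y * d2) * (K1 * K1 + K2 * K2) + F1 * N1 = dh * (b1 * K1 - a1 * K2) + h0 * m1 ->
  (F2x * d1 + F2y * d2) * (K1 * K1 + K2 * K2) + F2 * N2 = dh * (b2 * K1 - a2 * K2) + h0 * m2 ->
  Jx * d1 + Jy * d2 = 0 -> ~ (d1 = 0 /\ d2 = 0) ->
  F1 = Jx * b1 - Jy * a1 -> F2 = Jx * b2 - Jy * a2 ->
  F1 = 0 -> F2 = 0 -> ~ (F1x * (- Jy) + F1y * Jx = 0 /\ F2x * (- Jy) + F2y * Jx = 0) ->
  (a1 * d1 + b1 * d2 = 0 /\ a2 * d1 + b2 * d2 = 0) /\ h0 = 0 /\ dh <> 0.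
Proof.
  intros HS HJ HK k1 k2 E11 E12 E21 E22 E3 Hd DF1 DF2 F1z F2z HV.
  pose proof (sumsq_nz K1 K2 HK) as N.
  pose proof (sumsq_nz Jx Jy HJ) as JJ.
  pose proof (m_nonzero a1 b1 a2 b2 K1 K2 HS HK k1 k2) as HM.
  rewrite F1z, Rmult_0_l in E11. rewrite F2z, Rmult_0_l in E12.
  assert (H0 : h0 = 0).
  { destruct (Req_dec (b1 * K1 - a1 * K2) 0) as [M1|M1].
    - destruct (Req_dec (b2 * K1 - a2 * K2) 0) as [M2|M2].
      + exfalso; apply HM; auto.
      + symmetry in E12. apply (prod0 _ _ M2 E12).
    - symmetry in E11. apply (prod0 _ _ M1 E11). }
  split; [|split; [exact H0|]].
  - assert (G : forall a b, Jx * b - Jy * a = 0 -> a * d1 + b * d2 = 0).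
    { intros a b Hab. apply (prod0 _ _ JJ).
      replace ((a * d1 + b * d2) * (Jx * Jx + Jy * Jy)) with
        ((Jx * d2 - Jy * d1) * (Jx * b - Jy * a) + (Jx * d1 + Jy * d2) * (a * Jx + b * Jy)) by ring.
      rewrite Hab, E3. ring. }
    split; apply G. rewrite <- DF1; exact F1z. rewrite <- DF2; exact F2z.
  - intro Hdh. subst dh h0. rewrite F1z in E21. rewrite F2z in E22.
    rewrite !Rmult_0_l, !Rplus_0_r in E21, E22.
    pose proof (prod0 _ _ N E21) as Z1. pose proof (prod0 _ _ N E22) as Z2.
    pose proof (key_id F1x F1y Jx Jy d1 d2) as I1. rewrite Z1, E3, Rmult_0_l, Rmult_0_l, Rplus_0_r in I1.
    pose proof (key_id F2x F2y Jx Jy d1 d2) as I2. rewrite Z2, E3, Rmult_0_l, Rmult_0_l, Rplus_0_r in I2.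
    assert (C : Jx * d2 - Jy * d1 = 0).
    { destruct (Req_dec (F1x * (- Jy) + F1y * Jx) 0) as [V1|V1].
      - destruct (Req_dec (F2x * (- Jy) + F2y * Jx) 0) as [V2|V2].
        + exfalso; apply HV; auto.
        + symmetry in I2. apply (prod0 _ _ V2 I2).
      - symmetry in I1. apply (prod0 _ _ V1 I1). }
    apply Hd. split.
    + apply (prod0 _ _ JJ).
      replace (d1 * (Jx * Jx + Jy * Jy)) with (Jx * (Jx * d1 + Jy * d2) - Jy * (Jx * d2 - Jy * d1)) by ring.
      rewrite C, E3; ring.
    + apply (prod0 _ _ JJ).
      replace (d2 * (Jx * Jx + Jy * Jy)) with (Jy * (Jx * d1 + Jy * d2) + Jx * (Jx * d2 - Jy * d1)) by ring.
      rewrite C, E3; ring.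
Qed.


Definition LIM (f : R -> R) (l : R) := is_lim f 0 l.

Lemma LIM_spec f l : LIM f l <-> forall eps : posreal, exists d : posreal,
   forall h, Rabs h < d -> h <> 0 -> Rabs (f h - l) < eps.
Proof.
  unfold LIM. rewrite <- is_lim_spec. simpl. split.
  - intros H eps. destruct (H eps) as [d Hd]. exists d. intros h Hh Hh0.
    apply Hd; auto. change (Rabs (h - 0) < d). rewrite Rminus_0_r; exact Hh.
  - intros H eps. destruct (H eps) as [d Hd]. exists d. intros h Hh Hh0.
    apply Hd; auto. change (Rabs (h - 0) < d) in Hh. rewrite Rminus_0_r in Hh; exact Hh.
Qed.

Lemma LIM_mult f g a b : LIM f a -> LIM g b -> LIM (fun h => f h * g h) (a * b).
Proof.
  intros Ha Hb. unfold LIM. apply (is_lim_mult f g 0 a b Ha Hb). simpl; exact I.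
Qed.

Lemma LIM_inv f a : LIM f a -> a <> 0 -> LIM (fun h => / f h) (/ a).
Proof.
  intros Ha Hn. unfold LIM. apply (is_lim_inv f 0 a Ha). intro E; injection E; auto.
Qed.

Lemma LIM_opp f a : LIM f a -> LIM (fun h => - f h) (- a).
Proof. intros Ha. unfold LIM. apply (is_lim_opp f 0 a Ha). Qed.

Lemma LIM_const c : LIM (fun _ => c) c.
Proof. apply is_lim_const. Qed.

Lemma LIM_ext f g l : LIM f l -> (forall h, h <> 0 -> f h = g h) -> LIM g l.
Proof.
  intros H E. apply LIM_spec. intros eps. destruct (proj1 (LIM_spec f l) H eps) as [d Hd].
  exists d. intros h Hh Hh0. rewrite <- E by auto. apply Hd; auto.
Qed.

Lemma LIM_squeeze u a w : LIM w 0 ->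
  (exists d : posreal, forall h, Rabs h < d -> Rabs (u h - a) <= Rabs (w h)) -> LIM u a.
Proof.
  intros Hw [d0 Hd0]. apply LIM_spec. intros eps.
  destruct (proj1 (LIM_spec w 0) Hw eps) as [d Hd].
  exists (mkposreal _ (Rmin_stable_in_posreal d d0)). simpl. intros h Hh Hh0.
  apply Rle_lt_trans with (Rabs (w h)). apply Hd0. apply Rlt_le_trans with (1 := Hh), Rmin_r.
  rewrite <- (Rminus_0_r (w h)). apply Hd; auto. apply Rlt_le_trans with (1 := Hh), Rmin_l.
Qed.

Lemma LIM_comp2 F u v a b : continuity_2d_pt F a b -> LIM u a -> LIM v b ->
  LIM (fun h => F (u h) (v h)) (F a b).
Proof.
  intros HF Hu Hv. apply LIM_spec. intros eps.
  destruct (HF eps) as [d Hd].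
  destruct (proj1 (LIM_spec u a) Hu d) as [d1 H1].
  destruct (proj1 (LIM_spec v b) Hv d) as [d2 H2].
  exists (mkposreal _ (Rmin_stable_in_posreal d1 d2)). simpl. intros h Hh Hh0.
  apply Hd. apply H1; auto. apply Rlt_le_trans with (1 := Hh), Rmin_l.
  apply H2; auto. apply Rlt_le_trans with (1 := Hh), Rmin_r.
Qed.

Lemma LIM_cont (phi : R -> R) (s d : R) : is_derive phi s d -> LIM (fun h => phi (s + h)) (phi s).
Proof.
  intros Hd. apply is_derive_Reals in Hd.
  pose proof (derivable_continuous_pt phi s (exist _ d Hd)) as Hc.
  apply LIM_spec. intros eps. destruct (Hc eps (cond_pos eps)) as [al [Hal H]].
  exists (mkposreal al Hal). simpl. intros h Hh Hh0.
  change (R_dist (phi (s + h)) (phi s) < eps). apply H. split. split. exact I.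
  intro E; apply Hh0; lra. change (R_dist (s + h) s < al). unfold R_dist. replace (s + h - s) with h by ring. exact Hh.
Qed.

Lemma LIM_quot (phi : R -> R) (s d : R) : is_derive phi s d -> LIM (fun h => (phi (s + h) - phi s) / h) d.
Proof.
  intros Hd. apply is_derive_Reals in Hd. apply LIM_spec. intros eps.
  destruct (Hd eps (cond_pos eps)) as [al H]. exists al. intros h Hh Hh0. apply H; auto.
Qed.

Lemma LIM_derive (g : R -> R) (s L : R) : LIM (fun h => (g (s + h) - g s) / h) L -> is_derive g s L.
Proof.
  intros H. apply is_derive_Reals. intros eps Heps.
  destruct (proj1 (LIM_spec _ _) H (mkposreal eps Heps)) as [d Hd].
  exists d. intros h Hh0 Hh. apply Hd; auto.
Qed.

Lemma LIM_sub_const f a : LIM f a -> LIM (fun h => f h - a) 0.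
Proof.
  intros H. apply LIM_spec. intros eps. destruct (proj1 (LIM_spec _ _) H eps) as [d Hd].
  exists d. intros h Hh Hh0. rewrite Rminus_0_r. apply Hd; auto.
Qed.

Lemma between_abs a b c : Rmin a b <= c <= Rmax a b -> Rabs (c - a) <= Rabs (b - a).
Proof.
  unfold Rmin, Rmax. destruct (Rle_dec a b) as [H|H]; intros [H1 H2].
  - rewrite (Rabs_pos_eq (c - a)) by lra. rewrite (Rabs_pos_eq (b - a)) by lra. lra.
  - rewrite (Rabs_left1 (c - a)) by lra. rewrite (Rabs_left1 (b - a)) by lra. lra.
Qed.

Lemma between_box a b c m d : Rabs (a - m) < d -> Rabs (b - m) < d ->
  Rmin a b <= c <= Rmax a b -> Rabs (c - m) < d.
Proof.
  intros Ha Hb. apply Rabs_def2 in Ha. apply Rabs_def2 in Hb.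
  unfold Rmin, Rmax. destruct (Rle_dec a b) as [H|H]; intros [H1 H2]; apply Rabs_def1; lra.
Qed.

Lemma isd_y K x t : smooth2 K -> is_derive (fun s => K x s) t (pdy K x t).
Proof. intros H. apply Derive_correct. apply (dp_partials K x t (smooth2_diff K x t H)). Qed.

Lemma isd_x K y t : smooth2 K -> is_derive (fun s => K s y) t (pdx K t y).
Proof. intros H. apply Derive_correct. apply (dp_partials K t y (smooth2_diff K t y H)). Qed.

Lemma cont_of_isd (f : R -> R) t d : is_derive f t d -> continuity_pt f t.
Proof.
  intros H. apply is_derive_Reals in H. apply (derivable_continuous_pt f t (exist _ d H)).
Qed.

Lemma mvt_y K x a b : smooth2 K -> exists c, Rmin a b <= c <= Rmax a b /\
  K x b - K x a = pdy K x c * (b - a).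
Proof.
  intros H. apply (MVT_gen (fun s => K x s) a b (fun c => pdy K x c)).
  intros; apply isd_y; auto. intros z _; apply (cont_of_isd _ _ _ (isd_y K x z H)).
Qed.

Lemma mvt_x K y a b : smooth2 K -> exists c, Rmin a b <= c <= Rmax a b /\
  K b y - K a y = pdx K c y * (b - a).
Proof.
  intros H. apply (MVT_gen (fun s => K s y) a b (fun c => pdx K c y)).
  intros; apply isd_x; auto. intros z _; apply (cont_of_isd _ _ _ (isd_x K y z H)).
Qed.

Lemma deriv_implicit (K : R -> R -> R) (phi g : R -> R) (x0 y0 dl c s dphi : R) :
  smooth2 K -> is_derive phi s dphi -> 0 < c ->
  (forall u v, Rabs (u - x0) < dl -> Rabs (v - y0) < dl -> c <= pdy K u v) ->
  (forall t, Rabs (phi t - x0) < dl /\ Rabs (g t - y0) < dl) ->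
  (forall t, K (phi t) (g t) = 0) ->
  is_derive g s (- pdx K (phi s) (g s) * dphi / pdy K (phi s) (g s)).
Proof.
  intros SK Dphi Hc Hbox Hin HK.
  set (x := phi s). set (y := g s).
  assert (Hxi : forall h, exists xi, Rmin y (g (s + h)) <= xi <= Rmax y (g (s + h)) /\
     K (phi (s + h)) (g (s + h)) - K (phi (s + h)) y = pdy K (phi (s + h)) xi * (g (s + h) - y)).
  { intro h. apply mvt_y; auto. }
  assert (Hchi : forall h, exists chi, Rmin x (phi (s + h)) <= chi <= Rmax x (phi (s + h)) /\
     K (phi (s + h)) y - K x y = pdx K chi y * (phi (s + h) - x)).
  { intro h. apply mvt_x; auto. }
  set (xi := fun h => proj1_sig (constructive_indefinite_description _ (Hxi h))).
  set (chi := fun h => proj1_sig (constructive_indefinite_description _ (Hchi h))).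
  assert (Pxi : forall h, Rmin y (g (s + h)) <= xi h <= Rmax y (g (s + h)) /\
     K (phi (s + h)) (g (s + h)) - K (phi (s + h)) y = pdy K (phi (s + h)) (xi h) * (g (s + h) - y)).
  { intro h. exact (proj2_sig (constructive_indefinite_description _ (Hxi h))). }
  assert (Pchi : forall h, Rmin x (phi (s + h)) <= chi h <= Rmax x (phi (s + h)) /\
     K (phi (s + h)) y - K x y = pdx K (chi h) y * (phi (s + h) - x)).
  { intro h. exact (proj2_sig (constructive_indefinite_description _ (Hchi h))). }
  clearbody xi chi.
  assert (Kyc : forall h, c <= pdy K (phi (s + h)) (xi h)).
  { intro h. apply Hbox. apply Hin. apply (between_box y (g (s + h))).
    apply Hin. apply Hin. apply Pxi. }
  assert (Eh : forall h, g (s + h) - y =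
     - (pdx K (chi h) y * (phi (s + h) - x)) / pdy K (phi (s + h)) (xi h)).
  { intro h. destruct (Pxi h) as [_ A]. destruct (Pchi h) as [_ B].
    rewrite HK in A. unfold x, y in B. rewrite HK in B. fold x y in B.
    assert (Hn : pdy K (phi (s + h)) (xi h) <> 0) by (specialize (Kyc h); lra).
    field_simplify_eq; auto. lra. }
  assert (Lphi : LIM (fun h => phi (s + h)) x) by (apply (LIM_cont phi s dphi Dphi)).
  assert (Lchi : LIM chi x).
  { apply (LIM_squeeze _ _ (fun h => phi (s + h) - x)). apply LIM_sub_const; auto.
    exists (mkposreal 1 Rlt_0_1). intros h _. apply between_abs. apply Pchi. }
  assert (LKx : LIM (fun h => pdx K (chi h) y) (pdx K x y)).
  { apply (LIM_comp2 (pdx K) chi (fun _ => y)). apply differentiable_continuity_pt.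
    apply smooth2_diff. apply smooth2_pdx; auto. exact Lchi. apply LIM_const. }
  assert (Lg : LIM (fun h => g (s + h)) y).
  { apply (LIM_squeeze _ _ (fun h => pdx K (chi h) y * (phi (s + h) - x) * / c)).
    - replace 0 with (pdx K x y * 0 * / c) by ring. apply LIM_mult. apply LIM_mult.
      auto. apply LIM_sub_const; auto. apply LIM_const.
    - exists (mkposreal 1 Rlt_0_1). intros h _. rewrite Eh.
      specialize (Kyc h).
      unfold Rdiv. rewrite !Rabs_mult, Rabs_Ropp, !Rabs_mult.
      rewrite (Rabs_pos_eq (/ c)) by (apply Rlt_le, Rinv_0_lt_compat; auto).
      rewrite (Rabs_pos_eq (/ pdy K (phi (s + h)) (xi h))) by (apply Rlt_le, Rinv_0_lt_compat; lra).
      apply Rmult_le_compat_l. apply Rmult_le_pos; apply Rabs_pos.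
      apply Rinv_le_contravar; auto. }
  assert (Lxi : LIM xi y).
  { apply (LIM_squeeze _ _ (fun h => g (s + h) - y)). apply LIM_sub_const; auto.
    exists (mkposreal 1 Rlt_0_1). intros h _. apply between_abs. apply Pxi. }
  assert (LKy : LIM (fun h => pdy K (phi (s + h)) (xi h)) (pdy K x y)).
  { apply (LIM_comp2 (pdy K)). apply differentiable_continuity_pt.
    apply smooth2_diff. apply smooth2_pdy; auto. exact Lphi. exact Lxi. }
  assert (Ky0 : pdy K x y <> 0).
  { assert (c <= pdy K x y) by (apply Hbox; apply Hin). lra. }
  apply LIM_derive.
  apply (LIM_ext (fun h => (- pdx K (chi h) y * ((phi (s + h) - phi s) / h)) * / pdy K (phi (s + h)) (xi h))).
  - change (LIM (fun h => (- pdx K (chi h) y * ((phi (s + h) - phi s) / h)) * / pdy K (phi (s + h)) (xi h)) ((- pdx K x y * dphi) * / pdy K x y)). apply LIM_mult. apply LIM_mult. apply LIM_opp; auto.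
    apply LIM_quot; auto. apply LIM_inv; auto.
  - intros h Hh. fold y. rewrite Eh. fold x.
    assert (Hn : pdy K (phi (s + h)) (xi h) <> 0) by (specialize (Kyc h); lra).
    field. auto.
Qed.


Lemma frac_bound s : Rabs (s * / (1 + s * s)) <= 1 / 2.
Proof.
  assert (P : 0 < 1 + s * s) by nra.
  rewrite Rabs_mult, (Rabs_pos_eq (/ (1 + s * s))) by (apply Rlt_le, Rinv_0_lt_compat; auto).
  assert (Q : Rabs s * 2 <= 1 + s * s).
  { assert (E : Rabs s * Rabs s = s * s) by (rewrite <- Rabs_mult; apply Rabs_pos_eq; nra).
    assert (0 <= (Rabs s - 1) * (Rabs s - 1)) by apply Rle_0_sqr. nra. }
  apply Rmult_le_reg_r with (1 + s * s); auto.
  rewrite Rmult_assoc, Rinv_l by lra. lra.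
Qed.

Lemma phi_Ck x0 et n : Ck n (fun s => x0 + et * (s * / (1 + s * s))).
Proof.
  apply Ck_ext with (fun s => 1 * x0 + et * (s * / (1 * 1 + 1 * (s * s)))).
  apply Ck_lin. apply Ck_const. apply Ck_mul. apply Ck_id. apply Ck_inv.
  intro t; assert (0 <= t * t) by apply Rle_0_sqr; lra.
  apply Ck_lin. apply Ck_const. apply Ck_mul; apply Ck_id.
  intro t. rewrite !Rmult_1_l. reflexivity.
Qed.

Lemma phi_der x0 et : is_derive (fun s => x0 + et * (s * / (1 + s * s))) 0 et.
Proof.
  auto_derive. nra. field.
Qed.

Lemma ift_pos (K : R -> R -> R) x0 y0 : smooth2 K -> K x0 y0 = 0 -> 0 < pdy K x0 y0 ->
  exists g1 g2 : R -> R, (forall n, Ck n g1) /\ (forall n, Ck n g2) /\ g1 0 = x0 /\ g2 0 = y0 /\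
    Derive g1 0 <> 0 /\ forall t, K (g1 t) (g2 t) = 0.
Proof.
  intros SK HK0 Hc0. set (c0 := pdy K x0 y0) in *.
  assert (HKy : continuity_2d_pt (pdy K) x0 y0).
  { apply differentiable_continuity_pt. apply smooth2_diff. apply smooth2_pdy; auto. }
  destruct (HKy (mkposreal (c0 / 2) ltac:(lra))) as [d1 Hd1]. simpl in Hd1.
  assert (Hbox : forall u v, Rabs (u - x0) < d1 -> Rabs (v - y0) < d1 -> c0 / 2 <= pdy K u v).
  { intros u v Hu Hv. specialize (Hd1 u v Hu Hv). apply Rabs_def2 in Hd1. fold c0 in Hd1. lra. }
  assert (MONO : forall x a b, Rabs (x - x0) < d1 -> Rabs (a - y0) < d1 -> Rabs (b - y0) < d1 ->
                  a < b -> K x a < K x b).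
  { intros x a b Hx Ha Hb Hab. destruct (mvt_y K x a b SK) as [c [Hcb E]].
    assert (c0 / 2 <= pdy K x c) by (apply Hbox; auto; apply (between_box a b); auto).
    assert (0 < pdy K x c * (b - a)) by (apply Rmult_lt_0_compat; lra). lra. }
  assert (Hd1p : 0 < d1) by apply cond_pos.
  set (r := d1 / 2).
  assert (Hr1 : Rabs (y0 + r - y0) < d1) by (unfold r; rewrite Rabs_pos_eq; lra).
  assert (Hr2 : Rabs (y0 - r - y0) < d1) by (unfold r; rewrite Rabs_left1; lra).
  assert (Hy0 : Rabs (y0 - y0) < d1) by (rewrite Rminus_diag, Rabs_R0; lra).
  assert (Hx0 : Rabs (x0 - x0) < d1) by (rewrite Rminus_diag, Rabs_R0; lra).
  assert (Kp : 0 < K x0 (y0 + r)).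
  { rewrite <- HK0. apply MONO; auto. unfold r; lra. }
  assert (Kn : K x0 (y0 - r) < 0).
  { rewrite <- HK0. apply MONO; auto. unfold r; lra. }
  destruct (differentiable_continuity_pt K x0 (y0 + r) (smooth2_diff _ _ _ SK)
              (mkposreal _ Kp)) as [d2 Hd2]. simpl in Hd2.
  destruct (differentiable_continuity_pt K x0 (y0 - r) (smooth2_diff _ _ _ SK)
              (mkposreal (- K x0 (y0 - r)) ltac:(lra))) as [d3 Hd3]. simpl in Hd3.
  set (et := Rmin d1 (Rmin d2 d3)).
  assert (Het : 0 < et).
  { unfold et. apply Rmin_pos. lra. apply Rmin_pos; apply cond_pos. }
  assert (Het1 : et <= d1) by apply Rmin_l.
  assert (Het2 : et <= d2) by (eapply Rle_trans; [apply Rmin_r| apply Rmin_l]).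
  assert (Het3 : et <= d3) by (eapply Rle_trans; [apply Rmin_r| apply Rmin_r]).
  set (phi := fun s => x0 + et * (s * / (1 + s * s))).
  assert (Hphi : forall s, Rabs (phi s - x0) < et).
  { intro s. unfold phi. replace (x0 + et * (s * / (1 + s * s)) - x0) with (et * (s * / (1 + s * s))) by ring.
    rewrite Rabs_mult, (Rabs_pos_eq et) by lra. pose proof (frac_bound s). nra. }
  assert (Hex : forall s, {y | y0 - r <= y <= y0 + r /\ K (phi s) y = 0}).
  { intro s. apply (IVT (fun t => K (phi s) t)).
    - intro t. apply (cont_of_isd _ _ _ (isd_y K (phi s) t SK)).
    - unfold r; lra.
    - assert (H := Hd3 (phi s) (y0 - r) ltac:(specialize (Hphi s); lra)
                      ltac:(rewrite Rminus_diag, Rabs_R0; apply cond_pos)).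
      apply Rabs_def2 in H. lra.
    - assert (H := Hd2 (phi s) (y0 + r) ltac:(specialize (Hphi s); lra)
                      ltac:(rewrite Rminus_diag, Rabs_R0; apply cond_pos)).
      apply Rabs_def2 in H. lra. }
  set (g := fun s => proj1_sig (Hex s)).
  assert (Hg : forall s, y0 - r <= g s <= y0 + r /\ K (phi s) (g s) = 0).
  { intro s. exact (proj2_sig (Hex s)). }
  clearbody g.
  assert (Hin : forall t, Rabs (phi t - x0) < d1 /\ Rabs (g t - y0) < d1).
  { intro t. split. specialize (Hphi t); lra.
    destruct (Hg t) as [[A B] _]. apply Rabs_def1; unfold r in *; lra. }
  assert (phi0 : phi 0 = x0).
  { unfold phi. rewrite Rmult_0_l, Rmult_0_r, Rplus_0_r. reflexivity. }
  assert (g0 : g 0 = y0).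
  { destruct (Hg 0) as [_ Z]. rewrite phi0 in Z.
    destruct (Rtotal_order (g 0) y0) as [L|[L|L]]; auto.
    - exfalso. assert (K x0 (g 0) < K x0 y0) by (apply MONO; auto; apply (Hin 0)). lra.
    - exfalso. assert (K x0 y0 < K x0 (g 0)) by (apply MONO; auto; apply (Hin 0)). lra. }
  assert (Cphi : forall n, Ck n phi) by (intro n; apply phi_Ck).
  assert (Dg : forall s, is_derive g s (- pdx K (phi s) (g s) * Derive phi s / pdy K (phi s) (g s))).
  { intro s. apply (deriv_implicit K phi g x0 y0 d1 (c0 / 2)).
    - exact SK.
    - apply Derive_correct. apply (proj1 (Cphi 1%nat)).
    - lra.
    - exact Hbox.
    - exact Hin.
    - intro t; apply Hg. }
  assert (Kynz : forall s, pdy K (phi s) (g s) <> 0).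
  { intro s. assert (c0 / 2 <= pdy K (phi s) (g s)) by (apply Hbox; apply Hin). lra. }
  assert (Cg : forall n, Ck n g).
  { induction n as [|n IH]. exact I. split.
    - intro t. eexists; apply Dg.
    - apply Ck_ext with (fun s => (-1) * (pdx K (phi s) (g s) * (Derive phi s * / pdy K (phi s) (g s))) + 0 * 0).
      + apply Ck_lin; [|apply Ck_const]. apply Ck_mul.
        apply Ck_comp2; auto. apply smooth2_pdx; auto.
        apply Ck_mul. apply (proj2 (Cphi (S n))).
        apply Ck_inv; auto. apply Ck_comp2; auto. apply smooth2_pdy; auto.
      + intro s. rewrite (is_derive_unique _ _ _ (Dg s)). field. auto. }
  exists phi, g. repeat split; auto.
  - intro E. assert (Dp : is_derive phi 0 et) by (unfold phi; apply phi_der). rewrite (is_derive_unique _ _ _ Dp) in E. lra.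
  - intro t; apply Hg.
Qed.

Lemma ift (K : R -> R -> R) x0 y0 : smooth2 K -> K x0 y0 = 0 -> pdy K x0 y0 <> 0 ->
  exists g1 g2 : R -> R, (forall n, Ck n g1) /\ (forall n, Ck n g2) /\ g1 0 = x0 /\ g2 0 = y0 /\
    Derive g1 0 <> 0 /\ forall t, K (g1 t) (g2 t) = 0.
Proof.
  intros SK H0 Hy. destruct (Rlt_or_le 0 (pdy K x0 y0)) as [P|P].
  - apply ift_pos; auto.
  - assert (S' : smooth2 (lin2 (-1) 0 K K)) by (apply smooth2_lin; auto).
    assert (E : pdy (lin2 (-1) 0 K K) = lin2 (-1) 0 (pdy K) (pdy K)).
    { apply (pd_lin false); intros; apply smooth2_diff; auto. }
    destruct (ift_pos (lin2 (-1) 0 K K) x0 y0 S') as [g1 [g2 [A [B [C [D [F G]]]]]]].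
    + unfold lin2; rewrite H0; ring.
    + rewrite E. unfold lin2. assert (pdy K x0 y0 < 0) by lra. lra.
    + exists g1, g2. repeat split; auto. intro t. specialize (G t). unfold lin2 in G. lra.
Qed.




Lemma curve f1 f2 x0 y0 : smooth2 f1 -> smooth2 f2 -> one_generic f1 f2 -> in_S1 f1 f2 x0 y0 ->
  exists g1 g2 : R -> R, (forall n, Ck n g1) /\ (forall n, Ck n g2) /\ g1 0 = x0 /\ g2 0 = y0 /\
    ~ (Derive g1 0 = 0 /\ Derive g2 0 = 0) /\ forall t, Jac f1 f2 (g1 t) (g2 t) = 0.
Proof.
  intros S1 S2 Hg [HJ HS].
  pose proof (Jac_smooth f1 f2 S1 S2) as SJ.
  destruct (Req_dec (pdy (Jac f1 f2) x0 y0) 0) as [Jy0|Jy0].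
  - assert (Jx0 : pdx (Jac f1 f2) x0 y0 <> 0) by (intro E; apply (Hg x0 y0 HJ); auto).
    destruct (ift (fun a b => Jac f1 f2 b a) y0 x0 (smooth2_swap _ SJ) HJ Jx0)
      as [h1 [h2 [C1 [C2 [E1 [E2 [D Z]]]]]]].
    exists h2, h1. repeat split; auto. intros [_ D']. auto.
  - destruct (ift (Jac f1 f2) x0 y0 SJ HJ Jy0) as [h1 [h2 [C1 [C2 [E1 [E2 [D Z]]]]]]].
    exists h1, h2. repeat split; auto. intros [D' _]. auto.
Qed.

Lemma pos_near (u : R -> R) d : is_derive u 0 d -> 0 < u 0 ->
  exists eps, 0 < eps /\ forall t, -eps < t < eps -> 0 < u t.
Proof.
  intros Hd Hu. apply is_derive_Reals in Hd.
  pose proof (derivable_continuous_pt u 0 (exist _ d Hd)) as Hc.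
  destruct (Hc (u 0 / 2) ltac:(lra)) as [al [Hal H]].
  exists al. split; auto. intros t Ht.
  destruct (Req_dec t 0) as [->|Ht0]. exact Hu.
  assert (Hr : R_dist (u t) (u 0) < u 0 / 2).
  { apply H. split. split. exact I. auto. unfold R_dist. simpl. unfold R_dist.
    rewrite Rminus_0_r. apply Rabs_def1; lra. }
  unfold R_dist in Hr. apply Rabs_def2 in Hr. lra.
Qed.

Lemma Ck_is_derive g : (forall n, Ck n g) -> forall t, is_derive g t (Derive g t).
Proof. intros H t. apply Derive_correct. destruct (H 1%nat) as [H1 _]. apply H1. Qed.

Lemma smooth1_is_derive g : smooth1 g -> forall t, is_derive g t (Derive g t).
Proof. intros H t. apply Derive_correct. apply (H 1%nat t). Qed.

Lemma part1 (f1 f2 : R -> R -> R) :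
  smooth2 f1 -> smooth2 f2 -> one_generic f1 f2 ->
  forall x0 y0 : R, in_S1 f1 f2 x0 y0 ->
    (simple_cusp f1 f2 x0 y0 <->
       (Ffun f1 f2 f1 x0 y0 = 0 /\ Ffun f1 f2 f2 x0 y0 = 0 /\
        ~ (pdx (Ffun f1 f2 f1) x0 y0 * (- pdy (Jac f1 f2) x0 y0)
             + pdy (Ffun f1 f2 f1) x0 y0 * pdx (Jac f1 f2) x0 y0 = 0 /\
           pdx (Ffun f1 f2 f2) x0 y0 * (- pdy (Jac f1 f2) x0 y0)
             + pdy (Ffun f1 f2 f2) x0 y0 * pdx (Jac f1 f2) x0 y0 = 0))).
Proof.
  intros S1 S2 Hg x0 y0 HS1.
  pose proof HS1 as [HJ HS].
  assert (HJg : ~ (pdx (Jac f1 f2) x0 y0 = 0 /\ pdy (Jac f1 f2) x0 y0 = 0)) by (apply Hg; exact HJ).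
  split.
  - intros [_ [eps [g1 [g2 [k1 [k2 [He [sg1 [sg2 [sk1 [sk2 [E1 [E2 [Hd [Hloc [Hker Hh]]]]]]]]]]]]]]]].
    cbv zeta in Hh. destruct Hh as [Hh0 Hdh].
    pose proof (smooth1_is_derive _ sg1 0) as D1. pose proof (smooth1_is_derive _ sg2 0) as D2.
    pose proof (smooth1_is_derive _ sk1 0) as Dk1. pose proof (smooth1_is_derive _ sk2 0) as Dk2.
    destruct (core_i f1 f2 f1 g1 g2 k1 k2 _ _ _ _ eps S1 S2 S1 D1 D2 Dk1 Dk2 He
               (fun t Ht => proj1 (proj2 (proj2 (Hloc t Ht))))) as [_ [N1 [m1 [A1 B1]]]].
    destruct (core_i f1 f2 f2 g1 g2 k1 k2 _ _ _ _ eps S1 S2 S2 D1 D2 Dk1 Dk2 He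
               (fun t Ht => proj2 (proj2 (proj2 (Hloc t Ht))))) as [_ [N2 [m2 [A2 B2]]]].
    pose proof (core_J f1 f2 g1 g2 _ _ eps S1 S2 D1 D2 He (fun t Ht => proj1 (Hloc t Ht))) as E3.
    destruct (Hloc 0 ltac:(lra)) as [_ [Hk0 [kr1 kr2]]].
    rewrite E1, E2 in *.
    eapply alg_forward; eassumption.
  - intros [F1z [F2z HV]].
    destruct (curve f1 f2 x0 y0 S1 S2 Hg HS1) as [g1 [g2 [C1 [C2 [E1 [E2 [Hd HZ]]]]]]].
    set (r := if Req_EM_T (pdx f1 x0 y0) 0 then (if Req_EM_T (pdy f1 x0 y0) 0 then f2 else f1) else f1).
    assert (Sr : smooth2 r) by (unfold r; repeat destruct Req_EM_T; auto).
    assert (Hr0 : ~ (pdx r x0 y0 = 0 /\ pdy r x0 y0 = 0)).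
    { unfold r; repeat destruct Req_EM_T; try (intros [? ?]; contradiction).
      intros [? ?]. apply HS; auto. }
    assert (Hrow : forall x y, Jac f1 f2 x y = 0 ->
       in_kerDf f1 f2 x y (- pdy r x y) (pdx r x y)).
    { intros x y Hxy. unfold in_kerDf, Jac in *.
      unfold r; repeat destruct Req_EM_T; split; lra. }
    set (k1 := fun t => - pdy r (g1 t) (g2 t)).
    set (k2 := fun t => pdx r (g1 t) (g2 t)).
    assert (Ck1 : forall n, Ck n k1).
    { intro n. apply Ck_ext with (fun t => (-1) * pdy r (g1 t) (g2 t) + 0 * 0).
      apply Ck_lin. apply Ck_comp2; auto. apply smooth2_pdy; auto. apply Ck_const.
      intro t; unfold k1; ring. }
    assert (Ck2 : forall n, Ck n k2).
    { intro n. apply Ck_comp2; auto. apply smooth2_pdx; auto. }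
    pose proof (Ck_is_derive _ C1 0) as D1. pose proof (Ck_is_derive _ C2 0) as D2.
    pose proof (Ck_is_derive _ Ck1 0) as Dk1. pose proof (Ck_is_derive _ Ck2 0) as Dk2.
    destruct (pos_near (fun t => k1 t * k1 t + k2 t * k2 t) _
                (D_plus _ _ _ _ _ (D_mul _ _ _ _ _ Dk1 Dk1) (D_mul _ _ _ _ _ Dk2 Dk2)))
      as [eps [He Hpos]].
    { cbv beta.
      pose proof (sumsq_nz (k1 0) (k2 0)) as NZ.
      assert (~ (k1 0 = 0 /\ k2 0 = 0)).
      { unfold k1, k2. rewrite E1, E2. intros [A B]. apply Hr0. split; lra. }
      specialize (NZ H).
      assert (0 <= k1 0 * k1 0) by apply Rle_0_sqr. assert (0 <= k2 0 * k2 0) by apply Rle_0_sqr.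
      lra. }
    assert (Hloc : forall t, -eps < t < eps ->
       Jac f1 f2 (g1 t) (g2 t) = 0 /\ ~ (k1 t = 0 /\ k2 t = 0) /\
       in_kerDf f1 f2 (g1 t) (g2 t) (k1 t) (k2 t)).
    { intros t Ht. split. apply HZ. split.
      - intros [A B]. specialize (Hpos t Ht). simpl in Hpos. rewrite A, B in Hpos. lra.
      - apply Hrow. apply HZ. }
    destruct (core_i f1 f2 f1 g1 g2 k1 k2 _ _ _ _ eps S1 S2 S1 D1 D2 Dk1 Dk2 He
               (fun t Ht => proj1 (proj2 (proj2 (Hloc t Ht))))) as [Hh [N1 [m1 [A1 B1]]]].
    destruct (core_i f1 f2 f2 g1 g2 k1 k2 _ _ _ _ eps S1 S2 S2 D1 D2 Dk1 Dk2 He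
               (fun t Ht => proj2 (proj2 (proj2 (Hloc t Ht))))) as [_ [N2 [m2 [A2 B2]]]].
    pose proof (core_J f1 f2 g1 g2 _ _ eps S1 S2 D1 D2 He (fun t Ht => proj1 (Hloc t Ht))) as E3.
    destruct (Hloc 0 ltac:(lra)) as [_ [Hk0 [kr1 kr2]]].
    rewrite E1, E2 in A1, B1, A2, B2, E3, kr1, kr2.
    destruct (alg_backward _ _ _ _ _ _ _ _ _ _ _ _ _ _ _ _ _ _ _ _ _ _ HS HJg Hk0 kr1 kr2 A1 A2 B1 B2 E3 Hd
               eq_refl eq_refl F1z F2z HV) as [[Kr1 Kr2] [Hh0 Hdh]].
    split. exact HS1.
    exists eps, g1, g2, k1, k2. split. exact He.
    split. apply Ck_smooth1; auto. split. apply Ck_smooth1; auto.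
    split. apply Ck_smooth1; auto. split. apply Ck_smooth1; auto.
    split. exact E1. split. exact E2. split. exact Hd. split. exact Hloc.
    split. split; assumption.
    cbv zeta. split. rewrite E1, E2. exact Hh0. exact Hdh.
Qed.

Theorem mainTheorem7 (f1 f2 : R -> R -> R) :
  smooth2 f1 -> smooth2 f2 -> one_generic f1 f2 ->
  forall x0 y0 : R, in_S1 f1 f2 x0 y0 ->
    (simple_cusp f1 f2 x0 y0 <->
       (Ffun f1 f2 f1 x0 y0 = 0 /\ Ffun f1 f2 f2 x0 y0 = 0 /\
        ~ (pdx (Ffun f1 f2 f1) x0 y0 * (- pdy (Jac f1 f2) x0 y0)
             + pdy (Ffun f1 f2 f1) x0 y0 * pdx (Jac f1 f2) x0 y0 = 0 /\
           pdx (Ffun f1 f2 f2) x0 y0 * (- pdy (Jac f1 f2) x0 y0)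
             + pdy (Ffun f1 f2 f2) x0 y0 * pdx (Jac f1 f2) x0 y0 = 0))) /\
    (simple_cusp f1 f2 x0 y0 <->
       (Jac f1 f2 x0 y0 = 0 /\ Ffun f1 f2 f1 x0 y0 = 0 /\ Ffun f1 f2 f2 x0 y0 = 0 /\
        (jac2 (Jac f1 f2) (Ffun f1 f2 f1) x0 y0 <> 0 \/
         jac2 (Jac f1 f2) (Ffun f1 f2 f2) x0 y0 <> 0))).
Proof.
  intros S1 S2 Hg x0 y0 HS1.
  pose proof (part1 f1 f2 S1 S2 Hg x0 y0 HS1) as P.
  split. exact P.
  rewrite P. destruct HS1 as [HJ _].
  assert (Q : forall A, jac2 (Jac f1 f2) A x0 y0 =
     pdx A x0 y0 * (- pdy (Jac f1 f2) x0 y0) + pdy A x0 y0 * pdx (Jac f1 f2) x0 y0).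
  { intro A. unfold jac2. ring. }
  rewrite !Q. split.
  - intros [A [B C]]. repeat split; auto.
    destruct (Req_dec (pdx (Ffun f1 f2 f1) x0 y0 * - pdy (Jac f1 f2) x0 y0 +
                       pdy (Ffun f1 f2 f1) x0 y0 * pdx (Jac f1 f2) x0 y0) 0); [right|left]; auto.
  - intros [_ [A [B C]]]. repeat split; auto. intros [U V]. destruct C; contradiction.
Qed.
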